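(* Let $1,2,3,4$ be four distinct vertices of $G$ such that $G[\{1,2,3,4\}]$ has edge set exactly $\{12,23,24,34\}$ and $w_{23}\ge w_{24}$. If $\Gamma_G$ is population monotonic, then $w_{23}\ge w_{12}+w_{34}$ and $w_{23}\ge w_{24}+w_{34}$.
   Context: $G=(V,E;w)$ is a finite simple graph with edge weights $w:E\to\mathbb{R}$, $w_e>0$ for all $e\in E$; $w_{ij}$ denotes the weight of edge $ij$. The matching game on $G$ is the cooperative game $\Gamma_G=(N,\gamma)$ with player set $N=V$ and, for $S\subseteq N$, $\gamma(S)$ equal to the maximum weight of a matching in the induced subgraph $G[S]$ (so $\gamma(\emptyset)=0$). A population monotonic allocation scheme (PMAS) is a family $(\boldsymbol{x}_S)_{\emptyset\neq S\subseteq N}$ with $\boldsymbol{x}_S=(x_{S,i})_{i\in S}\in\mathbb{R}^S$ such that (efficiency) $\sum_{i\in S}x_{S,i}=\gamma(S)$ for every nonempty $S\subseteq N$, and (monotonicity) $x_{S,i}\le x_{T,i}$ whenever $\emptyset\ne S\subseteq T\subseteq N$ and $i\in S$. $\Gamma_G$ is called population monotonic if it admits a PMAS. *)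

(* Defs.v *)
From mathcomp Require Import all_boot all_order all_algebra.
Set Implicit Arguments. Unset Strict Implicit. Unset Printing Implicit Defensive.
Import Order.TTheory GRing.Theory Num.Theory.
Local Open Scope ring_scope.

Section Matching.
Variables (R : realFieldType) (T : finType) (e : rel T) (w : T -> T -> R).

Definition simple_graph := symmetric e /\ irreflexive e.
Definition good_weights :=
  (forall x y, w x y = w y x) /\ (forall x y, e x y -> 0 < w x y).

Definition pairs_meet (p q : T * T) : bool :=
  [|| p.1 == q.1, p.1 == q.2, p.2 == q.1 | p.2 == q.2].

(* A matching of G[S]: a set of ordered pairs (each edge listed once, as
   one orientation), each an edge with both ends in S, pairwise vertex
   disjoint. *)
Definition is_matching_in (S : {set T}) (M : {set T * T}) : bool :=
  [forall p in M, [&& e p.1 p.2, p.1 \in S & p.2 \in S]] &&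
  [forall p in M, forall q in M, (p != q) ==> ~~ pairs_meet p q].

Definition mweight (M : {set T * T}) : R := \sum_(p in M) w p.1 p.2.

(* gamma(S): maximum weight of a matching in G[S] (empty matching gives 0) *)
Definition gamma (S : {set T}) : R :=
  \big[Order.max/0]_(M : {set T * T} | is_matching_in S M) mweight M.

Definition is_PMAS (x : {set T} -> T -> R) : Prop :=
  (forall S : {set T}, S != set0 -> \sum_(i in S) x S i = gamma S) /\
  (forall (S U : {set T}) (i : T), S != set0 -> S \subset U -> i \in S ->
      x S i <= x U i).

Definition population_monotonic : Prop := exists x, is_PMAS x.

End Matching.

(* Main.v *)
Require Import Defs.
From mathcomp Require Import all_boot all_order all_algebra.
From mathcomp Require Import lra.
Import Order.TTheory GRing.Theory Num.Theory.
Local Open Scope ring_scope.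
Set Implicit Arguments. Unset Strict Implicit.

Lemma matching_mem (T : finType) (e : rel T) S M (p : T * T) :
  is_matching_in e S M -> p \in M -> [&& e p.1 p.2, p.1 \in S & p.2 \in S].
Proof. by case/andP=> /forall_inP H _ /H. Qed.

Lemma matching_disj (T : finType) (e : rel T) S M (p q : T * T) :
  is_matching_in e S M -> p \in M -> q \in M -> p != q -> ~~ pairs_meet p q.
Proof.
case/andP=> _ /forall_inP H Hp Hq; move: (H p Hp) => /forall_inP/(_ q Hq)/implyP.
exact.
Qed.

Lemma gamma_ge (R : realFieldType) (T : finType) (e : rel T) (w : T -> T -> R) S M :
  is_matching_in e S M -> mweight w M <= gamma e w S.
Proof.
move=> HM; rewrite /gamma -big_filter.
have : M \in [seq M <- index_enum {set T * T} | is_matching_in e S M].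
  by rewrite mem_filter HM mem_index_enum.
elim: [seq _ <- _ | _] => // N s IH; rewrite inE big_cons.
case/orP=> [/eqP->|/IH H]; rewrite le_max ?lexx //.
by rewrite H orbT.
Qed.

Lemma gamma_ge0 (R : realFieldType) (T : finType) (e : rel T) (w : T -> T -> R) S :
  0 <= gamma e w S.
Proof.
have -> : 0 = mweight w set0 by rewrite /mweight big_set0.
apply: gamma_ge; apply/andP; split; apply/forall_inP => p; by rewrite inE.
Qed.

Lemma gamma_le (R : realFieldType) (T : finType) (e : rel T) (w : T -> T -> R) S c :
  0 <= c -> (forall M, is_matching_in e S M -> mweight w M <= c) -> gamma e w S <= c.
Proof.
move=> c0 H; rewrite /gamma; apply: (big_ind (fun x => x <= c)) => // x y hx hy.
by rewrite ge_max hx hy.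
Qed.

Lemma single_matching (R : realFieldType) (T : finType) (e : rel T) (w : T -> T -> R)
   (S : {set T}) u v : e u v -> u \in S -> v \in S ->
  is_matching_in e S [set (u,v)] /\ mweight w [set (u, v)] = w u v.
Proof.
move=> euv uS vS; split; last by rewrite /mweight big_set1.
apply/andP; split; apply/forall_inP => p; rewrite inE => /eqP -> /=.
  by rewrite euv uS vS.
by apply/forall_inP => q; rewrite inE => /eqP ->; rewrite eqxx.
Qed.

Lemma triple_bound (R : realFieldType) (T : finType) (e : rel T) (w : T -> T -> R)
  (a0 b0 c0 : T) M (c : R) : simple_graph e ->
  is_matching_in e (a0 |: (b0 |: [set c0])) M -> 0 <= c ->
  (forall x y, x \in [:: a0; b0; c0] -> y \in [:: a0; b0; c0] -> e x y -> w x y <= c) ->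
  mweight w M <= c.
Proof.
move=> [_ irr] HM c_ge0 Hb.
have uniqM : forall p q, p \in M -> q \in M -> p = q.
  move=> p q Hp Hq; apply/eqP; apply: contraT => Hne.
  rewrite -(negbTE (matching_disj HM Hp Hq Hne)).
  move: (matching_mem HM Hp) (matching_mem HM Hq).
  case: p q {Hp Hq Hne} => [p1 p2] [q1 q2] /=; rewrite !inE.
  move => /and3P[ep /or3P[]/eqP E1 /or3P[]/eqP E2] /and3P[eq' /or3P[]/eqP E3 /or3P[]/eqP E4];

  subst; first [by rewrite irr in ep | by rewrite irr in eq' |
                by rewrite /pairs_meet /= !eqxx ?orbT].
case: (set_0Vmem M) => [->|[p Hp]]; first by rewrite /mweight big_set0.
rewrite /mweight (bigD1 p Hp) /= big1 ?addr0.
  move: (matching_mem HM Hp); case: p Hp => p1 p2 _ /= /and3P[ep H1 H2].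
  by apply: Hb => //; move: H1 H2; rewrite !inE.
by move=> q /andP[Hq /eqP[]]; apply: uniqM.
Qed.

Lemma ne0 (T : finType) (i : T) (A : {set T}) : i \in A -> A != set0.
Proof. by move=> H; apply/set0Pn; exists i. Qed.

Unset Implicit Arguments.
Theorem mainTheorem6 (R : realFieldType) (T : finType) (e : rel T)
  (w : T -> T -> R) (v1 v2 v3 v4 : T) :
  simple_graph e -> good_weights e w ->
  uniq [:: v1; v2; v3; v4] ->
  e v1 v2 -> e v2 v3 -> e v2 v4 -> e v3 v4 ->
  ~~ e v1 v3 -> ~~ e v1 v4 ->
  w v2 v4 <= w v2 v3 ->
  population_monotonic e w ->
  w v1 v2 + w v3 v4 <= w v2 v3 /\ w v2 v4 + w v3 v4 <= w v2 v3.
Proof.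
move=> sg gw uq e12 e23 e24 e34 n13 n14 cb [x [Eff Mon]].
have [sym irr] := sg; have [wsym wpos] := gw.
move: uq; rewrite /= !inE !negb_or => /and4P[/and3P[n12' n13' n14'] /andP[n23' n24'] n34' _].
have nn : forall (S : {set T}) i, i \in S -> 0 <= x S i.
  move=> S i iS; apply: le_trans (Mon [set i] S i _ _ _); rewrite ?set11 //.
  - have := Eff [set i] (ne0 (set11 i)); rewrite big_set1 => ->; exact: gamma_ge0.
  - exact: ne0 (set11 i).
  - by rewrite sub1set.
have pairF : forall u v, e u v -> u != v ->
   x (u |: [set v]) u + x (u |: [set v]) v >= w u v.
  move=> u v euv nuv.
  have S0 : u |: [set v] != set0 by apply: (ne0 (i := u)); rewrite !inE eqxx.
  have := Eff _ S0; rewrite big_setU1 ?big_set1 /=; last by rewrite inE.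
  move=> ->; have [H1 H2] := single_matching w euv (setU11 u [set v]) (setU1r u (set11 v)).
  by rewrite -H2; apply: gamma_ge H1.
have tripF : forall u v z, u != v -> u != z -> v != z ->
   x (u |: (v |: [set z])) u + x (u |: (v |: [set z])) v + x (u |: (v |: [set z])) z
   = gamma e w (u |: (v |: [set z])).
  move=> u v z nuv nuz nvz.
  have S0 : u |: (v |: [set z]) != set0 by apply: (ne0 (i := u)); rewrite !inE eqxx.
  have h1 : u \notin v |: [set z] by rewrite !inE negb_or nuv nuz.
  have h2 : v \notin [set z] by rewrite !inE.
  by rewrite -(Eff _ S0) big_setU1 // big_setU1 // big_set1 /= addrA.
have mono : forall (S U : {set T}) i, i \in S -> S \subset U -> x S i <= x U i.
  by move=> S U i iS sSU; apply: Mon => //; apply: ne0 iS.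
have s1 : forall (a0 b0 c0 : T), a0 |: [set b0] \subset a0 |: (b0 |: [set c0]).
  by move=> a0 b0 c0; apply/subsetP => k; rewrite !inE; case/orP=> /eqP->; rewrite !eqxx ?orbT.
have s2 : forall (a0 b0 c0 : T), b0 |: [set c0] \subset a0 |: (b0 |: [set c0]).
  by move=> a0 b0 c0; apply/subsetP => k; rewrite !inE; case/orP=> /eqP->; rewrite !eqxx ?orbT.
have s3 : forall (a0 b0 c0 : T), a0 |: [set c0] \subset a0 |: (b0 |: [set c0]).
  by move=> a0 b0 c0; apply/subsetP => k; rewrite !inE; case/orP=> /eqP->; rewrite !eqxx ?orbT.
have U123 : forall c, 0 <= c -> w v1 v2 <= c -> w v2 v3 <= c ->
    gamma e w (v1 |: (v2 |: [set v3])) <= c.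
  move=> c c0 ha hb; apply: gamma_le => // M HM; apply: (triple_bound _ HM) => //.
  move=> y0 y1; rewrite !inE ?orbF => /or3P[]/eqP-> /or3P[]/eqP-> eyz;
  first [by rewrite irr in eyz | by rewrite (negbTE n13) in eyz |
         by rewrite sym (negbTE n13) in eyz | done | by rewrite wsym].
have U234 : forall c, 0 <= c -> w v2 v3 <= c -> w v2 v4 <= c -> w v3 v4 <= c ->
    gamma e w (v2 |: (v3 |: [set v4])) <= c.
  move=> c c0 hb hc hd; apply: gamma_le => // M HM; apply: (triple_bound _ HM) => //.
  move=> y0 y1; rewrite !inE ?orbF => /or3P[]/eqP-> /or3P[]/eqP-> eyz;
  first [by rewrite irr in eyz | done | by rewrite wsym].
have pa := pairF _ _ e12 n12'.
have pb := pairF _ _ e23 n23'.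
have pc := pairF _ _ e24 n24'.
have pd := pairF _ _ e34 n34'.
have t123 := tripF _ _ _ n12' n13' n23'.
have t234 := tripF _ _ _ n23' n24' n34'.
have i1 : forall (a0 b0 : T), a0 \in a0 |: [set b0] by move=> a0 b0; rewrite !inE eqxx.
have i2 : forall (a0 b0 : T), b0 \in a0 |: [set b0] by move=> a0 b0; rewrite !inE eqxx orbT.
have m1 := mono _ _ _ (i1 v1 v2) (s1 v1 v2 v3).
have m2 := mono _ _ _ (i2 v1 v2) (s1 v1 v2 v3).
have m3 := mono _ _ _ (i2 v2 v3) (s2 v1 v2 v3).
have m4 := mono _ _ _ (i1 v2 v3) (s1 v2 v3 v4).
have m5 := mono _ _ _ (i2 v2 v3) (s1 v2 v3 v4).
have m6 := mono _ _ _ (i1 v2 v4) (s3 v2 v3 v4).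
have m7 := mono _ _ _ (i2 v2 v4) (s3 v2 v3 v4).
have m8 := mono _ _ _ (i1 v3 v4) (s2 v2 v3 v4).
have m9 := mono _ _ _ (i2 v3 v4) (s2 v2 v3 v4).
have z1 := nn _ _ (i1 v2 v3).
have z2 := nn _ _ (i2 v2 v3).
have z3 := nn _ _ (i2 v2 v4).
have z4 := nn _ _ (i2 v3 v4).
have z5 := nn _ _ (i1 v2 v4).
have z6 := nn _ _ (i1 v3 v4).
have z7 := nn _ _ (i1 v1 v2).
have z8 := nn _ _ (i2 v1 v2).
have wa := wpos _ _ e12. have wb := wpos _ _ e23.
have wc := wpos _ _ e24. have wd := wpos _ _ e34.
have [hbd|hbd] := orP (le_total (w v2 v3) (w v3 v4)).
  have u2 := U234 (w v3 v4) (ltW wd) hbd (le_trans cb hbd) (lexx _).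
  have [hab|hab] := orP (le_total (w v1 v2) (w v2 v3)).
    have u1 := U123 (w v2 v3) (ltW wb) hab (lexx _).
    exfalso; lra.
  have u1 := U123 (w v1 v2) (ltW wa) (lexx _) hab.
  exfalso; lra.
have u2 := U234 (w v2 v3) (ltW wb) (lexx _) cb hbd.
have [hab|hab] := orP (le_total (w v1 v2) (w v2 v3)).
  have u1 := U123 (w v2 v3) (ltW wb) hab (lexx _).
  split; lra.
have u1 := U123 (w v1 v2) (ltW wa) (lexx _) hab.
split; lra.
Qed.
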